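(* Let $\Theta=\tilde p/p$ be a rational inner function on $\mathbb{D}^2$, where $p(z)=a+bz_1+cz_2$ is a polynomial with a zero on $\mathbb{T}^2$. Then $|a|=|b|+|c|$.
   Context: $\mathbb{D}$ is the open unit disk, $\mathbb{T}$ the unit circle. Here $\Theta=\tilde p/p$ means the standard representation of a rational inner function: $p$ has no zeros on $\mathbb{D}^2$ (so that $\Theta$ is holomorphic on $\mathbb{D}^2$), and $\tilde p(z)=z_1z_2\overline{p(1/\bar z_1,1/\bar z_2)}$. *)

(* Defs.v *)
From mathcomp Require Import all_boot all_order all_algebra.
From mathcomp Require Import complex.
Set Implicit Arguments. Unset Strict Implicit. Unset Printing Implicit Defensive.
Import Order.TTheory GRing.Theory Num.Theory.
Local Open Scope ring_scope.

Definition affp (R : rcfType) (a b c : R[i]) (z1 z2 : R[i]) : R[i] :=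
  a + b * z1 + c * z2.

Definition in_bidisk (R : rcfType) (z1 z2 : R[i]) : Prop :=
  `|z1| < 1 /\ `|z2| < 1.
Definition in_torus (R : rcfType) (z1 z2 : R[i]) : Prop :=
  `|z1| = 1 /\ `|z2| = 1.

(* Standard representation Theta = ptilde/p: p has no zeros on D^2. *)
Definition no_zeros_on_bidisk (R : rcfType) (p : R[i] -> R[i] -> R[i]) : Prop :=
  forall z1 z2, in_bidisk z1 z2 -> p z1 z2 != 0.

(* Main.v *)
Require Import Defs.
From mathcomp Require Import all_boot all_order all_algebra.
From mathcomp Require Import complex.
From mathcomp Require Import ring.
Import Order.TTheory GRing.Theory Num.Theory.
Local Open Scope ring_scope.

Lemma conj_div_norm (C : numClosedFieldType) (b : C) : b * (b^* / `|b|) = `|b|.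
Proof.
rewrite mulrA -normCK; case: (eqVneq `|b| 0) => [->|nz].
  by rewrite expr0n mul0r.
by rewrite expr2 mulfK.
Qed.

Lemma norm_conj_div (C : numClosedFieldType) (b : C) : `| b^* / `|b| | <= 1.
Proof.
rewrite normrM normfV norm_conjC normr_id.
case: (eqVneq `|b| 0) => [->|nz]; first by rewrite mul0r ler01.
by rewrite mulfV.
Qed.

Lemma main_gen (C : numClosedFieldType) (a b c : C) :
  (forall z1 z2 : C, `|z1| < 1 -> `|z2| < 1 -> a + b * z1 + c * z2 != 0) ->
  (exists z1 z2 : C, `|z1| = 1 /\ `|z2| = 1 /\ a + b * z1 + c * z2 = 0) ->
  `|a| = `|b| + `|c|.
Proof.
move=> H [w1 [w2 [n1 [n2 e]]]].
apply/eqP; rewrite eq_le; apply/andP; split.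
  have -> : a = - (b * w1 + c * w2).
    by apply/eqP; rewrite -subr_eq0 opprK addrA e.
  rewrite normrN; apply: (le_trans (ler_normD _ _)).
  by rewrite !normrM n1 n2 !mulr1.
have an : a != 0 by have := H 0 0; rewrite !normr0 ltr01 !mulr0 !addr0; apply.
rewrite real_leNgt ?realD ?ger0_real ?addr_ge0 //; apply/negP => lt.
set s := `|b| + `|c|.
have s0 : 0 < s by apply: le_lt_trans lt.
have na : `|a| != 0 by rewrite normr_eq0.
set t := `|a| / s; set u := a / `|a|.
have t0 : 0 <= t by rewrite divr_ge0 // ltW.
have t1 : t < 1 by rewrite /t ltr_pdivrMr // mul1r.
have tu : `|t * u| = t.
  by rewrite normrM (ger0_norm t0) /u normrM normfV normr_id mulfV // mulr1.
have bd : forall x : C, `| - (t * u * (x^* / `|x|)) | < 1.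
  move=> x; rewrite normrN normrM tu; apply: le_lt_trans t1.
  by rewrite -{2}(mulr1 t) ler_wpM2l // norm_conj_div.
have := H _ _ (bd b) (bd c); rewrite !mulrN (mulrCA b (t * u)) (mulrCA c (t * u)) !conj_div_norm.
have -> : a + - (t * u * `|b|) + - (t * u * `|c|) = a - t * u * s.
  by rewrite /s; ring.
rewrite /t /u; have sn : s != 0 by rewrite gt_eqF.
have -> : `|a| / s * (a / `|a|) * s = a.
  by rewrite mulrAC (divfK sn) mulrC (divfK na).
by rewrite subrr eqxx.
Qed.

Theorem proposition5p3 (R : rcfType) (a b c : R[i]) :
  no_zeros_on_bidisk (affp a b c) ->
  (exists z1 z2 : R[i], in_torus z1 z2 /\ affp a b c z1 z2 = 0) ->
  `|a| = `|b| + `|c|.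
Proof.
move=> H [z1 [z2 [[n1 n2] e]]].
apply: (@main_gen (R[i]) a b c).
  by move=> w1 w2 h1 h2; apply: (H w1 w2); split.
by exists z1, z2.
Qed.
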